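(* Let $k\ge 1$ be an integer, $w>0$ a real number, and $\alpha=1/(k+1)$. The solution $u(z)$ of the differential equation \[ u''(z) - 2u'(z) + \left(1 - w k z^{k-1}\right)u(z) = 0,\qquad u(0)=-1,\ u'(0)=0, \] is \[ u(z) = z e^z \sum_{m\ge 0} \left(\frac{wk}{(k+1)^2}\right)^m \frac{z^{(k+1)m}}{m!\,(m+\alpha)_m} \;-\; e^z \sum_{m\ge 0} \left(\frac{wk}{(k+1)^2}\right)^m \frac{z^{(k+1)m}}{m!\,(m-\alpha)_m}, \] where $(x)_m = x(x-1)\cdots(x-m+1)$ denotes the falling factorial (with $(x)_0=1$).
   Context: In the paper $w=w(t)=\ell(t)/k!$ for a plane binary tree $t$ with $k$ nodes and $\ell(t)$ increasing labelings; the function $u$ arises from the Riccati substitution $S_t=-u'/u$ for the generating function $S_t$ of plane increasing binary trees avoiding fringe subtree shape $t$. *)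

(* Defs.v *)
From Stdlib Require Import Reals Factorial.
From Coquelicot Require Import Coquelicot.
Open Scope R_scope.

Fixpoint falling (x : R) (m : nat) : R :=
  match m with
  | O => 1
  | S n => falling x n * (x - INR n)
  end.

Definition alpha (k : nat) : R := / (INR k + 1).

Definition ratio (k : nat) (w : R) : R := w * INR k / (INR k + 1) ^ 2.

Definition hyp_series (k : nat) (w s z : R) : R :=
  Series (fun m => ratio k w ^ m * z ^ ((k + 1) * m)
                   / (INR (Factorial.fact m) * falling (INR m + s) m)).

Definition u_sol (k : nat) (w z : R) : R :=
  z * exp z * hyp_series k w (alpha k) z
  - exp z * hyp_series k w (- alpha k) z.

(* Main.v *)
Require Import Defs.
From Stdlib Require Import Reals Factorial Lra Lia Psatz FunctionalExtensionality.
From Coquelicot Require Import Coquelicot.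
Open Scope R_scope.


Lemma falling_S x n : falling x (S n) = x * falling (x - 1) n.
Proof.
  revert x; induction n as [|n IH]; intro x.
  - simpl. ring.
  - change (falling x (S (S n))) with (falling x (S n) * (x - INR (S n))).
    rewrite IH. simpl (falling (x-1) (S n)). rewrite S_INR. ring.
Qed.

Lemma falling_rec m s :
  falling (INR (S m) + s) (S m) = (INR m + 1 + s) * falling (INR m + s) m.
Proof.
  rewrite falling_S, S_INR. replace (INR m + 1 + s - 1) with (INR m + s) by ring. ring.
Qed.

Lemma falling_pos m s : -1 < s -> 0 < falling (INR m + s) m.
Proof.
  intro Hs. induction m as [|m IH].
  - simpl. lra.
  - rewrite falling_rec. apply Rmult_lt_0_compat; auto. pose proof (pos_INR m); lra.
Qed.

Definition aco k w s (m : nat) : R :=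
  ratio k w ^ m / (INR (Factorial.fact m) * falling (INR m + s) m).

Lemma aco_rec k w s m : -1 < s ->
  aco k w s (S m) = aco k w s m * ratio k w / ((INR m + 1) * (INR m + 1 + s)).
Proof.
  intro Hs. unfold aco. rewrite falling_rec, fact_simpl, mult_INR, S_INR.
  pose proof (falling_pos m s Hs). pose proof (INR_fact_lt_0 m). pose proof (pos_INR m).
  simpl pow. field. repeat split; lra.
Qed.

Lemma aco_nz k w s m : -1 < s -> ratio k w <> 0 -> aco k w s m <> 0.
Proof.
  intros Hs Hr. unfold aco. pose proof (falling_pos m s Hs). pose proof (INR_fact_lt_0 m).
  apply Rmult_integral_contrapositive_currified.
  - apply pow_nonzero; auto.
  - apply Rinv_neq_0_compat. apply Rmult_integral_contrapositive_currified; lra.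
Qed.

Lemma aco_radius k w s : -1 < s -> ratio k w <> 0 -> CV_radius (aco k w s) = p_infty.
Proof.
  intros Hs Hr. apply CV_radius_infinite_DAlembert.
  - intro n; apply aco_nz; auto.
  - apply is_lim_seq_ext with
      (u := fun n => Rabs (ratio k w) * / ((INR n + 1) * (INR n + 1 + s))).
    + intro n. rewrite aco_rec by auto. pose proof (aco_nz k w s n Hs Hr).
      pose proof (pos_INR n).
      assert (Hp : 0 < (INR n + 1) * (INR n + 1 + s)) by (apply Rmult_lt_0_compat; lra).
      rewrite <- (Rabs_pos_eq (/ ((INR n + 1) * (INR n + 1 + s)))) by (left; apply Rinv_0_lt_compat; lra).
      rewrite <- Rabs_mult. f_equal. field. repeat split; lra.
    + replace (Finite 0) with (Rbar_mult (Rabs (ratio k w)) (Rbar_inv p_infty))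
        by (simpl; f_equal; ring).
      apply is_lim_seq_scal_l. apply is_lim_seq_inv; [|discriminate].
      apply is_lim_seq_le_p_loc with (u := INR); [|exact is_lim_seq_INR].
      exists 0%nat. intros n _. pose proof (pos_INR n). nra.
Qed.


Section G.
Variables (k : nat) (w s : R).
Hypothesis Hs : -1 < s.
Hypothesis Hr : ratio k w <> 0.

Definition g0 := PSeries (aco k w s).
Definition g1 := PSeries (PS_derive (aco k w s)).
Definition g2 := PSeries (PS_derive (PS_derive (aco k w s))).

Lemma rad0 y : Rbar_lt (Rabs y) (CV_radius (aco k w s)).
Proof. rewrite aco_radius by auto. exact I. Qed.
Lemma rad1 y : Rbar_lt (Rabs y) (CV_radius (PS_derive (aco k w s))).
Proof. rewrite CV_radius_derive. apply rad0. Qed.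
Lemma rad2 y : Rbar_lt (Rabs y) (CV_radius (PS_derive (PS_derive (aco k w s)))).
Proof. rewrite !CV_radius_derive. apply rad0. Qed.

Lemma g0_der y : is_derive g0 y (g1 y).
Proof. apply is_derive_PSeries, rad0. Qed.
Lemma g1_der y : is_derive g1 y (g2 y).
Proof. apply is_derive_PSeries, rad1. Qed.

Lemma g_ode y : y * g2 y + (1 + s) * g1 y - ratio k w * g0 y = 0.
Proof.
  pose proof (PSeries_correct _ _ (CV_radius_inside _ _ (rad0 y))) as H0.
  pose proof (PSeries_correct _ _ (CV_radius_inside _ _ (rad1 y))) as H1.
  pose proof (PSeries_correct _ _ (CV_radius_inside _ _ (rad2 y))) as H2.
  fold g0 in H0; fold g1 in H1; fold g2 in H2.
  pose proof (is_pseries_plus _ _ _ _ _ (is_pseries_incr_1 _ _ _ H2)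
     (is_pseries_scal (1 + s) _ _ _ (Rmult_comm _ _) H1)) as HA.
  pose proof (is_pseries_scal (ratio k w) _ _ _ (Rmult_comm _ _) H0) as HB.
  apply (is_pseries_ext _ (PS_scal (ratio k w) (aco k w s))) in HA.
  - apply is_pseries_unique in HA. apply is_pseries_unique in HB.
    rewrite HA in HB. unfold scal, plus in HB; simpl in HB. unfold mult in HB; simpl in HB.
    rewrite <- HB. ring.
  - intro n. unfold PS_plus, PS_scal, PS_incr_1, PS_derive, scal, plus; simpl. unfold mult; simpl.
    rewrite (aco_rec k w s n Hs). pose proof (pos_INR n).
    destruct n as [|j].
    + unfold zero; simpl. field. lra.
    + change (match j with 0%nat => 1 | S _ => INR j + 1 end) with (INR (S j)).
      try rewrite (aco_rec k w s (S j) Hs). rewrite !S_INR in *. field. split; lra.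
Qed.

End G.


Lemma hyp_g k w s z : hyp_series k w s z = g0 k w s (z ^ (k + 1)).
Proof.
  unfold hyp_series, g0, PSeries. apply Series_ext. intro n.
  unfold scal; simpl; unfold mult; simpl. unfold aco. rewrite pow_mult. unfold Rdiv. ring.
Qed.

Lemma comp_der k (f f' : R -> R) (Hf : forall y, is_derive f y (f' y)) z :
  is_derive (fun z => f (z ^ (k + 1))) z ((INR k + 1) * z ^ k * f' (z ^ (k + 1))).
Proof.
  replace ((INR k + 1) * z ^ k * f' (z ^ (k + 1)))
    with (scal (INR (k + 1) * one * z ^ Nat.pred (k + 1)) (f' (z ^ (k + 1)))).
  - apply (is_derive_comp f (fun z => z ^ (k + 1))). apply Hf.
    apply is_derive_pow. exact (@is_derive_id R_AbsRing z).
  - rewrite Nat.add_1_r. simpl Nat.pred. rewrite S_INR.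
    unfold scal, one; simpl; unfold mult; simpl. ring.
Qed.


Section Main.
Variables (k : nat) (w : R).
Hypothesis hk : (1 <= k)%nat.
Hypothesis hw : 0 < w.

Let K := INR k.
Let a := alpha k.

Lemma K_ge1 : 1 <= K.
Proof. unfold K. apply (le_INR 1). exact hk. Qed.

Lemma ratio_nz : ratio k w <> 0.
Proof. pose proof K_ge1. unfold ratio. fold K. apply Rgt_not_eq. unfold Rdiv.
  apply Rmult_lt_0_compat; [nra|]. apply Rinv_0_lt_compat. nra. Qed.

Lemma a_bounds : 0 < a < 1.
Proof. pose proof K_ge1. unfold a, alpha. fold K. split.
  - apply Rinv_0_lt_compat; lra.
  - rewrite <- Rinv_1. apply Rinv_lt_contravar; lra. Qed.

Lemma sA : -1 < a. Proof. pose proof a_bounds; lra. Qed.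
Lemma sB : -1 < - a. Proof. pose proof a_bounds; lra. Qed.

Definition A0 z := g0 k w a (z ^ (k + 1)).
Definition A1 z := g1 k w a (z ^ (k + 1)).
Definition A2 z := g2 k w a (z ^ (k + 1)).
Definition B0 z := g0 k w (- a) (z ^ (k + 1)).
Definition B1 z := g1 k w (- a) (z ^ (k + 1)).
Definition B2 z := g2 k w (- a) (z ^ (k + 1)).

Lemma dA0 z : is_derive A0 z ((K + 1) * z ^ k * A1 z).
Proof. apply (comp_der k (g0 k w a)). intro; apply g0_der; [apply sA|apply ratio_nz]. Qed.
Lemma dA1 z : is_derive A1 z ((K + 1) * z ^ k * A2 z).
Proof. apply (comp_der k (g1 k w a)). intro; apply g1_der; [apply sA|apply ratio_nz]. Qed.
Lemma dB0 z : is_derive B0 z ((K + 1) * z ^ k * B1 z).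
Proof. apply (comp_der k (g0 k w (-a))). intro; apply g0_der; [apply sB|apply ratio_nz]. Qed.
Lemma dB1 z : is_derive B1 z ((K + 1) * z ^ k * B2 z).
Proof. apply (comp_der k (g1 k w (-a))). intro; apply g1_der; [apply sB|apply ratio_nz]. Qed.

Lemma Dr_A0 z : Derive (fun x : R => A0 x) z = (K + 1) * z ^ k * A1 z.
Proof. apply is_derive_unique, dA0. Qed.
Lemma Dr_B0 z : Derive (fun x : R => B0 x) z = (K + 1) * z ^ k * B1 z.
Proof. apply is_derive_unique, dB0. Qed.
Lemma Dr_A1 z : Derive (fun x : R => A1 x) z = (K + 1) * z ^ k * A2 z.
Proof. apply is_derive_unique, dA1. Qed.
Lemma Dr_B1 z : Derive (fun x : R => B1 x) z = (K + 1) * z ^ k * B2 z.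
Proof. apply is_derive_unique, dB1. Qed.

Definition U z := z * exp z * A0 z - exp z * B0 z.
Definition U1 z := exp z * A0 z + z * exp z * A0 z + z * exp z * ((K + 1) * z ^ k * A1 z)
   - exp z * B0 z - exp z * ((K + 1) * z ^ k * B1 z).
Definition U2 z :=
  exp z * A0 z + exp z * ((K + 1) * z ^ k * A1 z)
  + exp z * A0 z + z * exp z * A0 z + z * exp z * ((K + 1) * z ^ k * A1 z)
  + (K + 1) * (exp z * z ^ k * A1 z + z * exp z * z ^ k * A1 z
               + z * exp z * (K * z ^ (k - 1)) * A1 z
               + z * exp z * z ^ k * ((K + 1) * z ^ k * A2 z))
  - (exp z * B0 z + exp z * ((K + 1) * z ^ k * B1 z))
  - (K + 1) * (exp z * z ^ k * B1 z + exp z * (K * z ^ (k - 1)) * B1 z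
               + exp z * z ^ k * ((K + 1) * z ^ k * B2 z)).

Lemma dU z : is_derive U z (U1 z).
Proof.
  unfold U, U1. auto_derive.
  - split; [exists ((K + 1) * z ^ k * A1 z); apply dA0|].
    split; [exists ((K + 1) * z ^ k * B1 z); apply dB0|]. exact I.
    rewrite (Dr_A0 z), (Dr_B0 z). ring.
Qed.

Lemma dU1 z : is_derive U1 z (U2 z).
Proof.
  unfold U1, U2. auto_derive; repeat split; try exact I;
    try (eexists; first [exact (dA0 z) | exact (dB0 z) | exact (dA1 z) | exact (dB1 z)]).
  { rewrite (Dr_A0 z), (Dr_B0 z).
    rewrite (Dr_A1 z), (Dr_B1 z).
    rewrite <- Nat.sub_1_r. fold K. ring. }
Qed.

Lemma pow_k z : z ^ k = z * z ^ (k - 1).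
Proof. replace k with (S (k - 1)) at 1 by lia. reflexivity. Qed.
Lemma pow_k1 z : z ^ (k + 1) = z * (z * z ^ (k - 1)).
Proof. rewrite Nat.add_1_r. simpl. rewrite pow_k. reflexivity. Qed.

Lemma U_ode z : U2 z - 2 * U1 z + (1 - w * K * z ^ (k - 1)) * U z = 0.
Proof.
  assert (EA : z ^ (k + 1) * A2 z + (1 + a) * A1 z - ratio k w * A0 z = 0).
  { unfold A0, A1, A2. apply g_ode; [apply sA | apply ratio_nz]. }
  assert (EB : z ^ (k + 1) * B2 z + (1 + - a) * B1 z - ratio k w * B0 z = 0).
  { unfold B0, B1, B2. apply g_ode; [apply sB | apply ratio_nz]. }
  pose proof K_ge1.
  transitivity (exp z * (K + 1) ^ 2 * (z * z ^ (k - 1) *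
     (z ^ (k + 1) * A2 z + (1 + a) * A1 z - ratio k w * A0 z)
     - z ^ (k - 1) * (z ^ (k + 1) * B2 z + (1 + - a) * B1 z - ratio k w * B0 z))).
  - unfold U, U1, U2, ratio, a, alpha. fold K. rewrite pow_k1, !pow_k.
    field. lra.
  - rewrite EA, EB. ring.
Qed.

End Main.


Lemma energy_bound x y t C : Rabs t <= C ->
  Rabs (2 * x * y + 2 * y * (2 * y - t * x)) <= (5 + C) * (x ^ 2 + y ^ 2).
Proof.
  intro Ht.
  assert (H1 : Rabs (2 * x * y) <= x ^ 2 + y ^ 2).
  { apply Rabs_le. pose proof (Rle_0_sqr (x+y)). pose proof (Rle_0_sqr (x-y)).
    unfold Rsqr in *. simpl. split; nra. }
  assert (H2 : Rabs (1 - t) <= 1 + C).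
  { eapply Rle_trans; [apply Rabs_triang|]. rewrite Rabs_Ropp, Rabs_R1. lra. }
  replace (2 * x * y + 2 * y * (2 * y - t * x)) with ((2 * x * y) * (1 - t) + 4 * y ^ 2) by ring.
  eapply Rle_trans; [apply Rabs_triang|]. rewrite Rabs_mult.
  rewrite (Rabs_pos_eq (4 * y ^ 2)) by nra.
  assert (Rabs (2 * x * y) * Rabs (1 - t) <= (x ^ 2 + y ^ 2) * (1 + C)).
  { apply Rmult_le_compat; try apply Rabs_pos; auto. }
  nra.
Qed.

Lemma ode_uniq (d d1 d2 q : R -> R) :
  (forall z, is_derive d z (d1 z)) -> (forall z, is_derive d1 z (d2 z)) ->
  (forall z, d2 z = 2 * d1 z - q z * d z) -> d 0 = 0 -> d1 0 = 0 ->
  (forall M, exists C, forall z, Rabs z <= M -> Rabs (q z) <= C) ->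
  forall z, d z = 0.
Proof.
  intros Hd Hd1 Hode H0 H10 Hq z0.
  destruct (Hq (Rabs z0)) as [C HC].
  assert (C0 : 0 <= C) by (eapply Rle_trans; [apply Rabs_pos| apply (HC z0); lra]).
  assert (Dd : forall c, Derive (fun x : R => d x) c = d1 c) by (intro; apply is_derive_unique, Hd).
  assert (Dd1 : forall c, Derive (fun x : R => d1 x) c = d2 c) by (intro; apply is_derive_unique, Hd1).
  set (L := 5 + C).
  set (E := fun z => d z ^ 2 + d1 z ^ 2).
  set (E1 := fun z => 2 * d z * d1 z + 2 * d1 z * d2 z).
  assert (HE : forall c, Rabs c <= Rabs z0 -> Rabs (E1 c) <= L * E c).
  { intros c Hc. unfold E1, E, L. rewrite Hode. apply energy_bound. auto. }
  assert (E0 : E 0 = 0) by (unfold E; rewrite H0, H10; ring).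
  assert (Epos : forall z, 0 <= E z) by (intro; unfold E; nra).
  assert (Hfin : E z0 <= 0).
  { destruct (Rle_lt_dec 0 z0) as [Hz|Hz].
    - set (F := fun z => E z * exp (- L * z)).
      assert (HF : forall c, is_derive F c ((E1 c - L * E c) * exp (- L * c))).
      { intro c. unfold F, E, E1. auto_derive.
        - repeat split; try exact I; eexists; first [exact (Hd c) | exact (Hd1 c)].
        - rewrite Dd, Dd1. ring. }
      destruct (MVT_cor4 F (fun c => (E1 c - L * E c) * exp (- L * c)) 0 (Rabs z0))
        with (b := z0) as [c [Hc1 Hc2]].
      + intros c _. apply HF.
      + rewrite Rminus_0_r. lra.
      + rewrite !Rminus_0_r in *.
        assert (Hc : Rabs c <= Rabs z0) by lra.
        specialize (HE c Hc). pose proof (Rle_abs (E1 c)).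
        pose proof (exp_pos (- L * c)).
        assert (HF0 : F z0 <= 0).
        { assert (F 0 = 0) by (unfold F; rewrite E0; ring).
          assert ((E1 c - L * E c) * exp (- L * c) * z0 <= 0).
          { apply Rmult_le_0_r; auto. apply Rmult_le_0_r; lra. }
          lra. }
        unfold F in HF0. pose proof (exp_pos (- L * z0)).
        nra.
    - set (F := fun z => E z * exp (L * z)).
      assert (HF : forall c, is_derive F c ((E1 c + L * E c) * exp (L * c))).
      { intro c. unfold F, E, E1. auto_derive.
        - repeat split; try exact I; eexists; first [exact (Hd c) | exact (Hd1 c)].
        - rewrite Dd, Dd1. ring. }
      destruct (MVT_cor4 F (fun c => (E1 c + L * E c) * exp (L * c)) 0 (Rabs z0))
        with (b := z0) as [c [Hc1 Hc2]].
      + intros c _. apply HF.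
      + rewrite Rminus_0_r. lra.
      + rewrite !Rminus_0_r in *.
        assert (Hc : Rabs c <= Rabs z0) by lra.
        specialize (HE c Hc). pose proof (Rle_abs (- E1 c)). rewrite Rabs_Ropp in *.
        pose proof (exp_pos (L * c)).
        assert (HF0 : F z0 <= 0).
        { assert (F 0 = 0) by (unfold F; rewrite E0; ring).
          assert (0 <= (E1 c + L * E c) * exp (L * c)) by (apply Rmult_le_pos; lra).
          nra. }
        unfold F in HF0. pose proof (exp_pos (L * z0)).
        nra. }
  unfold E in Hfin. nra.
Qed.


Theorem lemma3p2 (k : nat) (w : R) (hk : (1 <= k)%nat) (hw : 0 < w) :
  (* u_sol is twice differentiable on R and solves the IVP *)
  (forall z, ex_derive (u_sol k w) z /\ ex_derive (Derive (u_sol k w)) z) /\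
  (forall z, Derive (Derive (u_sol k w)) z - 2 * Derive (u_sol k w) z
             + (1 - w * INR k * z ^ (k - 1)) * u_sol k w z = 0) /\
  u_sol k w 0 = -1 /\ Derive (u_sol k w) 0 = 0 /\
  (* and it is the (unique) solution *)
  (forall (v v' v'' : R -> R),
     (forall z, is_derive v z (v' z)) ->
     (forall z, is_derive v' z (v'' z)) ->
     (forall z, v'' z - 2 * v' z + (1 - w * INR k * z ^ (k - 1)) * v z = 0) ->
     v 0 = -1 -> v' 0 = 0 ->
     forall z, v z = u_sol k w z).
Proof.
  assert (HU : u_sol k w = U k w).
  { apply functional_extensionality; intro z. unfold u_sol, U, A0, B0. rewrite !hyp_g. reflexivity. }
  assert (HD : Derive (U k w) = U1 k w).
  { apply functional_extensionality; intro z. apply is_derive_unique, dU; auto. }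
  assert (HD1 : Derive (U1 k w) = U2 k w).
  { apply functional_extensionality; intro z. apply is_derive_unique, dU1; auto. }
  assert (G00 : forall s, g0 k w s 0 = 1).
  { intro s. unfold g0. rewrite PSeries_0. unfold aco. simpl. field. }
  assert (Z0 : forall n, (0 < n)%nat -> 0 ^ n = 0) by (intros; apply pow_i; auto).
  rewrite HU, HD, HD1.
  split; [intro z; split; eexists; [apply dU | apply dU1]; auto |].
  split; [intro z; apply U_ode; auto |].
  split.
  { unfold U, A0, B0. rewrite Z0 by lia. rewrite !G00, exp_0. ring. }
  split.
  { unfold U1, A0, B0. rewrite Z0 by lia. rewrite (Z0 k) by lia. rewrite !G00, exp_0. ring. }
  intros v v' v'' Hv Hv' Hode Hv0 Hv'0 z.
  enough (v z - U k w z = 0) by lra.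
  apply (ode_uniq (fun z => v z - U k w z) (fun z => v' z - U1 k w z)
                  (fun z => v'' z - U2 k w z) (fun z => 1 - w * INR k * z ^ (k - 1))).
  - intro x. exact (is_derive_minus v (U k w) x (v' x) (U1 k w x) (Hv x) (dU k w hk hw x)).
  - intro x. exact (is_derive_minus v' (U1 k w) x (v'' x) (U2 k w x) (Hv' x) (dU1 k w hk hw x)).
  - intro x. pose proof (Hode x). pose proof (U_ode k w hk hw x). nra.
  - simpl. rewrite Hv0. unfold U, A0, B0. rewrite Z0 by lia. rewrite !G00, exp_0. ring.
  - simpl. rewrite Hv'0. unfold U1, A0, B0. rewrite Z0 by lia. rewrite (Z0 k) by lia. rewrite !G00, exp_0. ring.
  - intro M. exists (1 + w * INR k * M ^ (k - 1)). intros x Hx.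
    pose proof (pos_INR k).
    eapply Rle_trans; [apply Rabs_triang|]. rewrite Rabs_Ropp, Rabs_R1.
    rewrite !Rabs_mult, <- RPow_abs, (Rabs_pos_eq w), (Rabs_pos_eq (INR k)) by lra.
    apply Rplus_le_compat_l. apply Rmult_le_compat_l; [nra|].
    apply pow_incr. split; [apply Rabs_pos | exact Hx].
Qed.
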